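(* Let $x,y$ be non-commuting indeterminates and $C=xyx^{-1}y^{-1}$. Let $(R_n)_{n\in\mathbb Z}$ satisfy $$R_{2n}CR_{2n-2}=1+R_{2n-1},\qquad R_{2n+1}CR_{2n-1}=1+R_{2n}^4\qquad(n\in\mathbb Z),$$ with $R_0=yxy^{-1}$ and $R_1=y$. Then for all $n\ge0$, $R_n$ is a Laurent polynomial in $x,y$ with only non-negative integer coefficients.
   Context: Work in the free skew field (non-commutative rational functions) over $\mathbb C$ generated by $x,y$. A Laurent polynomial in $x,y$ is a $\mathbb Z$-linear combination of words in $x^{\pm1},y^{\pm1}$. *)

(* Defs.v *)
From mathcomp Require Import all_boot all_order all_algebra.
Set Implicit Arguments. Unset Strict Implicit. Unset Printing Implicit Defensive.
Import GRing.Theory.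
Local Open Scope ring_scope.

(* A letter of the free group on {x, y}: (is_y, is_inverse).
   (false,false)=x, (false,true)=x^-1, (true,false)=y, (true,true)=y^-1. *)
Definition letter := (bool * bool)%type.
Definition word := seq letter.

Definition eval_letter (D : unitRingType) (x y : D) (l : letter) : D :=
  let g := if l.1 then y else x in if l.2 then g^-1 else g.

Definition eval_word (D : unitRingType) (x y : D) (w : word) : D :=
  \prod_(l <- w) eval_letter x y l.

(* freely reduced words: no adjacent pair  g g^-1  or  g^-1 g *)
Definition reduced_word (w : word) : bool :=
  sorted (fun l1 l2 : letter => ~~ ((l1.1 == l2.1) && (l1.2 != l2.2))) w.

Definition division_ring (D : unitRingType) : Prop :=
  forall a : D, a != 0 -> a \is a GRing.unit.

(* the group ring Z[F(x,y)] of the free group embeds into D via x, y: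
   no nontrivial Z-combination of distinct reduced words vanishes. *)
Definition free_group_ring_embeds (D : unitRingType) (x y : D) : Prop :=
  forall s : seq (int * word),
    s != [::] -> uniq (map snd s) -> all reduced_word (map snd s) ->
    all (fun p => p.1 != 0) s ->
    \sum_(p <- s) p.1%:~R * eval_word x y p.2 != 0.

Definition commC (D : unitRingType) (x y : D) : D := x * y * x^-1 * y^-1.

Definition nonneg_laurent (D : unitRingType) (x y a : D) : Prop :=
  exists s : seq (nat * word), a = \sum_(p <- s) p.1%:R * eval_word x y p.2.

(* Main.v *)
Require Import Defs.
From mathcomp Require Import all_boot all_order all_algebra.
From mathcomp Require Import zify.
Import GRing.Theory Num.Theory.
Local Open Scope ring_scope.

Inductive ze := ZAtom of nat | ZZero | ZAdd of ze & ze | ZOpp of ze.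

Section Zm.
Variable V : zmodType.
Fixpoint zeval (env : seq V) (e : ze) : V :=
  match e with
  | ZAtom j => nth 0 env j
  | ZZero => 0
  | ZAdd a b => zeval env a + zeval env b
  | ZOpp a => - zeval env a
  end.
Fixpoint zcoef (e : ze) (i : nat) : int :=
  match e with
  | ZAtom j => if i == j then 1 else 0
  | ZZero => 0
  | ZAdd a b => zcoef a i + zcoef b i
  | ZOpp a => - zcoef a i
  end.
Lemma zeval_sum env e :
  zeval env e = \sum_(i < size env) (env`_i) *~ zcoef e i.
Proof.
elim: e => [j||a iha b ihb|a iha] /=.
- case: (ltnP j (size env)) => hj.
  + rewrite (bigD1 (Ordinal hj)) //= eqxx mulr1z big1 ?addr0 // => i /negbTE.
    by rewrite -val_eqE /= => ->.
  + rewrite nth_default // big1 // => i _.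
    by rewrite ifN ?mulr0z // neq_ltn (leq_trans (ltn_ord i) hj).
- by rewrite big1 // => i _; rewrite mulr0z.
- by rewrite iha ihb -big_split /=; apply: eq_bigr => i _; rewrite mulrzDr.
- by rewrite iha -sumrN; apply: eq_bigr => i _; rewrite mulrNz.
Qed.
Definition zcheck (a b : ze) (n : nat) :=
  all (fun i => zcoef a i == zcoef b i) (iota 0 n).
Lemma zcheck_sound env a b :
  zcheck a b (size env) -> zeval env a = zeval env b.
Proof.
move=> /allP h; rewrite !zeval_sum; apply: eq_bigr => i _.
have /h /eqP -> // : (i : nat) \in iota 0 (size env).
by rewrite mem_iota /= add0n.
Qed.
End Zm.

Ltac zm_index t env :=
  match env with
  | cons ?u ?r =>
      match constr:(tt) with
      | _ => let _ := match constr:(tt) with _ => unify t u end in constr:(O)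
      | _ => let n := zm_index t r in constr:(S n)
      end
  end.
Ltac zm_atoms t acc :=
  match t with
  | @GRing.add _ ?a ?b => let acc1 := zm_atoms a acc in zm_atoms b acc1
  | @GRing.opp _ ?a => zm_atoms a acc
  | @GRing.zero _ => acc
  | _ => match constr:(tt) with
         | _ => let _ := zm_index t acc in acc
         | _ => constr:(cons t acc)
         end
  end.
Ltac zm_reify t env :=
  match t with
  | @GRing.add _ ?a ?b =>
      let ra := zm_reify a env in let rb := zm_reify b env in constr:(ZAdd ra rb)
  | @GRing.opp _ ?a => let ra := zm_reify a env in constr:(ZOpp ra)
  | @GRing.zero _ => constr:(ZZero)
  | _ => let i := zm_index t env in constr:(ZAtom i)
  end.
Ltac zmod :=
  match goal with
  | |- @eq ?T ?l ?r =>
    let env0 := zm_atoms l (@nil T) in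
    let env := zm_atoms r env0 in
    let el := zm_reify l env in
    let er := zm_reify r env in
    change (@zeval _ env el = @zeval _ env er);
    apply: zcheck_sound; vm_compute; reflexivity
  end.


Ltac nc := repeat progress rewrite ?mulrDl ?mulrDr ?mulrBl ?mulrBr ?mulNr ?mulrN ?opprK ?mul1r ?mulr1 ?mulr0 ?mul0r ?mulrA.

Section Alg.
Variable D : unitRingType.
Variables (C Ci Q A B O O2 B2 : D).
Hypothesis CCi : C * Ci = 1.
Hypothesis CiC : Ci * C = 1.
Hypothesis J : Q * O = B * B + C * A * C * A.
Hypothesis K1 : C * A * Q - Q * A = C * B * C - B.
Hypothesis K2 : B * Q - Q * B * C = A - C * A * C.
Hypothesis QC : O * B = B * C * O.
Hypothesis Dd : A * B = Ci + O.
Hypothesis uO : O \is a GRing.unit.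
Hypothesis uB : B \is a GRing.unit.
Hypothesis Hodd : O2 * C * O = 1 + B ^+ 4.
Hypothesis Hev : B2 * C * B = 1 + O2.

Lemma uC : C \is a GRing.unit.
Proof. by apply/unitrP; exists Ci. Qed.

Lemma hO : O = A * B - Ci.
Proof. by rewrite Dd addrC addKr. Qed.
Lemma hCO : C * O = C * A * B - 1.
Proof. by rewrite hO mulrBr CCi mulrA. Qed.
Lemma hCOg X : X * C * O = X * C * A * B - X.
Proof. by rewrite -mulrA hCO mulrBr mulr1 !mulrA. Qed.
Lemma QCg X : X * O * B = X * B * C * O.
Proof. by rewrite -mulrA QC !mulrA. Qed.
Lemma e4 : B ^+ 4 = B * B * B * B.
Proof. by rewrite !exprS expr0 mulr1 !mulrA. Qed.

Lemma step_O2 : (Q * B - C * A) * C * B - 1 = O2.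
Proof.
have uCO : C * O \is a GRing.unit by rewrite unitrMl // uC.
apply: (mulIr uCO); rewrite [O2 * _]mulrA Hodd e4.
nc. rewrite -!QCg !hCOg hCO J. nc. zmod.
Qed.

Lemma uCB : C * B \is a GRing.unit.
Proof. by rewrite unitrMl // uC. Qed.
Lemma uCO : C * O \is a GRing.unit.
Proof. by rewrite unitrMl // uC. Qed.

Lemma step_B2 : B2 = Q * B - C * A.
Proof.
apply: (mulIr uCB); rewrite !mulrA Hev -step_O2; zmod.
Qed.

Lemma Hoddg X : X * O2 * C * O = X + X * B * B * B * B.
Proof. by rewrite -!mulrA [O2 * _]mulrA Hodd e4 mulrDr mulr1 !mulrA. Qed.
Lemma Hevg X : X * B2 * C * B = X + X * O2.
Proof. by rewrite -!mulrA [B2 * _]mulrA Hev mulrDr mulr1 ?mulrA. Qed.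

Lemma QCmid : B * O2 = O2 * C * B.
Proof.
apply: (mulIr uCO); rewrite !mulrA Hoddg -QCg Hodd e4. nc. zmod.
Qed.
Lemma QCmidg X : X * O2 * C * B = X * B * O2.
Proof. by rewrite -!mulrA [O2 * _]mulrA -QCmid !mulrA. Qed.

Lemma QC2 : O2 * B2 = B2 * C * O2.
Proof.
apply: (mulIr uCB); rewrite !mulrA Hevg QCmidg Hev. nc. zmod.
Qed.

Lemma D2 : B * B2 = Ci + O2.
Proof.
have h : B * B2 * C = 1 + O2 * C.
  apply: (mulIr uB); rewrite Hevg QCmid. nc. zmod.
have -> : B * B2 = B * B2 * C * Ci by rewrite -mulrA CCi mulr1.
by rewrite h mulrDl mul1r -mulrA CCi mulr1.
Qed.

Lemma K1s : C * A * Q = Q * A + C * B * C - B.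
Proof. by rewrite -addrA -K1 addrC subrK. Qed.
Lemma K2s : B * Q = Q * B * C + A - C * A * C.
Proof. by rewrite -addrA -K2 addrC subrK. Qed.
Lemma K2g X : X * B * Q = X * Q * B * C + X * A - X * C * A * C.
Proof. by rewrite -mulrA K2s mulrBr mulrDr !mulrA. Qed.
Lemma Js : C * A * C * A = Q * O - B * B.
Proof. by rewrite J addrC addKr. Qed.

Lemma J2 : Q * O2 = B2 * B2 + C * B * C * B.
Proof.
rewrite -[O2](addKr Ci) -D2 step_B2. nc.
rewrite K1s Js hO. nc. zmod.
Qed.

Lemma K1n : C * B * Q - Q * B = C * B2 * C - B2.
Proof. rewrite step_B2. nc. rewrite K2g. nc. zmod. Qed.

Lemma K2n : B2 * Q - Q * B2 * C = B - C * B * C.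
Proof. rewrite step_B2. nc. rewrite K2g K1s. nc. zmod. Qed.

Lemma alg_step : [/\ B2 = Q * B - C * A, Q * O2 = B2 * B2 + C * B * C * B,
  C * B * Q - Q * B = C * B2 * C - B2, B2 * Q - Q * B2 * C = B - C * B * C
  & O2 * B2 = B2 * C * O2 /\ B * B2 = Ci + O2].
Proof using CCi CiC J K1 K2 QC Dd uO uB Hodd Hev.
split; [exact: step_B2 | exact: J2 | exact: K1n | exact: K2n | split; [exact: QC2 | exact: D2]].
Qed.
End Alg.


Section Pos.
Variables (D : unitRingType) (x y : D).
Hypothesis hdiv : division_ring D.
Hypothesis hfree : free_group_ring_embeds x y.

Inductive pos : D -> Prop :=
| pos0 : pos 0
| posW w : pos (eval_word x y w)
| posD a b : pos a -> pos b -> pos (a + b)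
| posM a b : pos a -> pos b -> pos (a * b).

Lemma eval_cat w1 w2 : eval_word x y (w1 ++ w2) = eval_word x y w1 * eval_word x y w2.
Proof. by rewrite /eval_word big_cat. Qed.
Lemma eval_cons l w : eval_word x y (l :: w) = eval_letter x y l * eval_word x y w.
Proof. by rewrite /eval_word big_cons. Qed.
Lemma eval_nil : eval_word x y [::] = 1.
Proof. by rewrite /eval_word big_nil. Qed.

Definition lsum (s : seq (nat * word)) : D := \sum_(p <- s) p.1%:R * eval_word x y p.2.

Lemma pos_laurent z : pos z -> exists s, z = lsum s.
Proof.
elim=> [|w|a b _ [s1 ->] _ [s2 ->]|a b _ [s1 ->] _ [s2 ->]].
- by exists [::]; rewrite /lsum big_nil.
- by exists [:: (1%N, w)]; rewrite /lsum big_seq1 mul1r.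
- by exists (s1 ++ s2); rewrite /lsum big_cat.
- exists [seq (p.1 * q.1, p.2 ++ q.2)%N | p <- s1, q <- s2].
  rewrite /lsum big_allpairs_dep /= mulr_suml; apply: eq_bigr => p _.
  rewrite mulr_sumr; apply: eq_bigr => q _ /=.
  by rewrite eval_cat !mulr_natl mulrnAl mulrnAr mulnC mulrnA.
Qed.

Lemma xnz : x != 0.
Proof.
have := hfree [:: (1%:Z, [:: (false, false)])] isT isT isT isT.
by rewrite big_seq1 /= eval_cons eval_nil /eval_letter /= mulr1 mul1r.
Qed.
Lemma ynz : y != 0.
Proof.
have := hfree [:: (1%:Z, [:: (true, false)])] isT isT isT isT.
by rewrite big_seq1 /= eval_cons eval_nil /eval_letter /= mulr1 mul1r.
Qed.
Lemma ux : x \is a GRing.unit. Proof. exact: hdiv xnz. Qed.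
Lemma uy : y \is a GRing.unit. Proof. exact: hdiv ynz. Qed.

Definition canc (l l' : letter) := (l.1 == l'.1) && (l.2 != l'.2).
Definition push (l : letter) (acc : word) :=
  match acc with
  | l' :: acc' => if canc l l' then acc' else l :: acc
  | [::] => [:: l]
  end.
Definition rw (w : word) := foldr push [::] w.

Lemma rw_red w : reduced_word (rw w).
Proof.
elim: w => [//|l w IH] /=.
move: IH; rewrite /reduced_word; case: (rw w) => [//|l' acc] /= H.
case: ifP => hc; first exact: path_sorted H.
by rewrite /= H andbT; move: hc; rewrite /canc => ->.
Qed.

Lemma canc_eval l l' : canc l l' -> eval_letter x y l * eval_letter x y l' = 1.
Proof.
case: l l' => [b1 c1] [b2 c2]; rewrite /canc /eval_letter /= => /andP [/eqP <-].
have ug : (if b1 then y else x) \is a GRing.unit by case: b1; [exact: uy | exact: ux].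
by case: c1; case: c2 => //= _; [rewrite mulVr | rewrite mulrV].
Qed.

Lemma eval_rw w : eval_word x y (rw w) = eval_word x y w.
Proof.
elim: w => [//|l w IH] /=.
rewrite eval_cons -IH; case: (rw w) => [|l' acc] /=; first by rewrite !eval_cons.
case: ifP => hc; last by rewrite eval_cons.
by rewrite eval_cons mulrA canc_eval // mul1r.
Qed.

Definition isum (t : seq (int * word)) : D := \sum_(p <- t) p.1%:~R * eval_word x y p.2.

Lemma group (s : seq (nat * word)) : exists t : seq (int * word),
  [/\ uniq (map snd t), {subset map snd t <= map snd s}, all (fun p => 0 < p.1) t,
      isum t = lsum s & (t == [::]) = ((\sum_(p <- s) p.1)%N == 0%N)].
Proof.
elim: s => [|[c w] s [t [ut st pt et nt]]].
  by exists [::]; rewrite /isum /lsum !big_nil.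
case: (posnP c) => [->|cpos].
  exists t; split=> //.
  - by move=> v /st h; rewrite /= inE h orbT.
  - by rewrite /lsum big_cons /= mul0r add0r.
  - by rewrite big_cons /= add0n.
have hsum : ((\sum_(p <- (c, w) :: s) p.1)%N == 0%N) = false.
  by rewrite big_cons /=; apply/negbTE; rewrite -lt0n ltn_addr.
case: (boolP (w \in map snd t)) => hw.
  pose f := fun q : int * word => if q.2 == w then (q.1 + c%:Z, q.2) else q.
  have msnd : map snd (map f t) = map snd t.
    by rewrite -map_comp; apply: eq_map => q; rewrite /f /=; case: ifP.
  exists (map f t); split.
  - by rewrite msnd.
  - by rewrite msnd => v /st h; rewrite /= inE h orbT.
  - rewrite all_map; apply/allP => q qt /=; rewrite /f; case: ifP => _ /=.
      by rewrite addr_gt0 ?(allP pt q qt) ?ltz_nat.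
    exact: (allP pt q qt).
  - rewrite /isum big_map /lsum big_cons /= -/(lsum s) -et /isum.
    have -> : \sum_(j <- t) (f j).1%:~R * eval_word x y (f j).2 =
       \sum_(j <- t) (j.1%:~R * eval_word x y j.2 +
          (if j.2 == w then c%:R * eval_word x y w else 0)).
      apply: eq_bigr => q _; rewrite /f; case: ifP => /= h; last by rewrite addr0.
      by rewrite intrD mulrDl (eqP h).
    rewrite big_split /= addrC; congr (_ + _).
    rewrite -big_mkcond big_const_seq.
    have -> : count (fun j : int * word => j.2 == w) t = 1%N.
      by rewrite -(count_map snd (pred1 w)) count_uniq_mem // hw.
    by rewrite /= addr0.
  - rewrite hsum; apply/negbTE; move: hw; case: (t) => //.
exists ((c%:Z, w) :: t); split.
- by rewrite /= hw.
- by move=> v /=; rewrite !inE => /orP [->//|/st ->]; rewrite orbT.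
- by rewrite /= pt andbT ltz_nat.
- by rewrite /isum big_cons /lsum big_cons -/(lsum s) -et.
- by rewrite hsum.
Qed.

Lemma lsum_nz s : (0 < \sum_(p <- s) p.1)%N -> lsum s != 0.
Proof.
move=> hs.
pose s1 := map (fun p : nat * word => (p.1, rw p.2)) s.
have e1 : lsum s = lsum s1.
  by rewrite /lsum big_map; apply: eq_bigr => p _ /=; rewrite eval_rw.
have hs1 : (0 < \sum_(p <- s1) p.1)%N by rewrite big_map.
have [t [ut st pt et nt]] := group s1.
rewrite e1 -et; apply: hfree => //.
- by rewrite nt -lt0n.
- apply/allP => v /st /mapP [p /mapP [q _ ->] ->]; exact: rw_red.
- by apply/allP => p /(allP pt) /= h; exact: lt0r_neq0.
Qed.

Lemma pos_nz z : pos z -> 1 + z != 0.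
Proof.
move=> /pos_laurent [s ->].
have -> : 1 + lsum s = lsum ((1%N, [::]) :: s).
  by rewrite /lsum big_cons /= eval_nil mulr1.
by apply: lsum_nz; rewrite big_cons.
Qed.

Lemma pos_nonneg z : pos z -> nonneg_laurent x y z.
Proof. by move=> /pos_laurent [s ->]; exists s. Qed.
End Pos.

Section Main.
Variables (D : unitRingType) (x y : D).
Hypothesis hdiv : division_ring D.
Hypothesis hfree : free_group_ring_embeds x y.

Let ux := @ux _ x y hdiv hfree.
Let uy := @uy _ x y hdiv hfree.
Local Notation pos := (@pos D x y).

Ltac cxy := rewrite ?(mulrK ux) ?(mulrVK ux) ?(mulrK uy) ?(mulrVK uy)
  ?(mulrV ux) ?(mulVr ux) ?(mulrV uy) ?(mulVr uy) ?mul1r ?mulr1.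

Definition Cc := commC x y.
Definition Ci := y * x * y^-1 * x^-1.
Definition a := (1 + y) * x^-1.
Definition u := a * a * y^-1.
Definition w := x * x * y^-1.
Definition Q := u + w.
Definition g := y * x^-1 * y * x^-1 * y^-1.
Definition pp := y * x^-1 * x^-1.
Definition al k := y * x^-1 * pp ^+ k.
Definition be k := w ^+ k * x^-1.

Lemma CCi : Cc * Ci = 1.
Proof. rewrite /Cc /commC /Ci !mulrA. do 8 cxy. by []. Qed.
Lemma CiC : Ci * Cc = 1.
Proof. rewrite /Cc /commC /Ci !mulrA. do 8 cxy. by []. Qed.

Lemma pos_word1 (b c : bool) : pos (eval_letter x y (b, c)).
Proof.
have := posW D x y [:: (b, c)].
by rewrite /eval_word big_cons big_nil mulr1.
Qed.
Lemma posx : pos x. Proof. exact: (pos_word1 false false). Qed.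
Lemma posxi : pos x^-1. Proof. exact: (pos_word1 false true). Qed.
Lemma posy : pos y. Proof. exact: (pos_word1 true false). Qed.
Lemma posyi : pos y^-1. Proof. exact: (pos_word1 true true). Qed.
Lemma pos1 : pos 1.
Proof. by have := posW D x y [::]; rewrite /eval_word big_nil. Qed.

Hint Resolve posx posxi posy posyi pos1 pos0 : core.
Ltac posauto := repeat (apply: posD || apply: posM || apply: posx || apply: posxi || apply: posy
   || apply: posyi || apply: pos1 || apply: pos0).

Lemma posX z k : pos z -> pos (z ^+ k).
Proof. by move=> hz; elim: k => [|k IH]; rewrite ?expr0 // exprS; apply: posM. Qed.

Lemma posa : pos a. Proof. rewrite /a. posauto. Qed.
Lemma posu : pos u. Proof. by rewrite /u; apply: posM; [apply: posM; exact: posa | exact: posyi]. Qed.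
Lemma posw : pos w. Proof. rewrite /w. posauto. Qed.
Lemma posg : pos g. Proof. rewrite /g. posauto. Qed.
Lemma posal k : pos (al k).
Proof. rewrite /al; apply: posM; [posauto | apply: posX; rewrite /pp; posauto]. Qed.
Lemma posbe k : pos (be k).
Proof. rewrite /be; apply: posM; [apply: posX; exact: posw | exact: posxi]. Qed.

Lemma posug : pos (u - g).
Proof.
have -> : u - g = (x^-1 * x^-1 + x^-1 * y * x^-1 + y * x^-1 * x^-1) * y^-1.
  rewrite /u /g /a. nc. zmod.
posauto.
Qed.

Lemma poswuC : pos (w * u - Cc).
Proof.
have -> : w * u - Cc = x * x * y^-1 * x^-1 * x^-1 * y^-1
   + x * x * y^-1 * x^-1 * y * x^-1 * y^-1 + y^-1.
  rewrite /w /u /a /Cc /commC. nc. do 6 cxy. zmod.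
posauto.
Qed.

Lemma gal k : g * al k = al k.+1.
Proof. rewrite /g /al /pp exprS !mulrA. do 3 cxy. by []. Qed.
Lemma wbe k : w * be k = be k.+1.
Proof. by rewrite /be exprS mulrA. Qed.
Lemma ppw : pp * w = 1.
Proof. rewrite /pp /w !mulrA. do 4 cxy. by []. Qed.
Lemma ppwk k : pp ^+ k * w ^+ k = 1.
Proof.
elim: k => [|k IH]; first by rewrite !expr0 mulr1.
by rewrite exprSr exprS mulrA -[pp ^+ k * pp * w]mulrA ppw mulr1 IH.
Qed.
Lemma albe k : al k * be k.+1 = Ci.
Proof.
rewrite /al /be exprSr !mulrA -[y * x^-1 * pp ^+ k * w ^+ k]mulrA ppwk mulr1.
rewrite /Ci. do 4 cxy. by [].
Qed.


Variable R : int -> D.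
Hypothesis hev : forall n : int,
     R (2 * n) * commC x y * R (2 * n - 2) = 1 + R (2 * n - 1).
Hypothesis hodd : forall n : int,
     R (2 * n + 1) * commC x y * R (2 * n - 1) = 1 + R (2 * n) ^+ 4.
Hypothesis h0 : R 0 = y * x * y^-1.
Hypothesis h1 : R 1 = y.

Definition E (m : nat) := R (Posz (2 * m)).
Definition Od (m : nat) := R (Posz (2 * m + 1)).

Lemma hevN m : E m.+1 * Cc * E m = 1 + Od m.
Proof.
have h := hev (Posz m.+1); rewrite /E /Od /Cc.
have -> : Posz (2 * m.+1) = 2 * Posz m.+1 by lia.
have -> : Posz (2 * m) = 2 * Posz m.+1 - 2 by lia.
have -> : Posz (2 * m + 1) = 2 * Posz m.+1 - 1 by lia.
exact: h.
Qed.

Lemma hoddN m : Od m.+1 * Cc * Od m = 1 + E m.+1 ^+ 4.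
Proof.
have h := hodd (Posz m.+1); rewrite /E /Od /Cc.
have -> : Posz (2 * m.+1 + 1) = 2 * Posz m.+1 + 1 by lia.
have -> : Posz (2 * m + 1) = 2 * Posz m.+1 - 1 by lia.
have -> : Posz (2 * m.+1) = 2 * Posz m.+1 by lia.
exact: h.
Qed.

Lemma E0 : E 0 = y * x * y^-1. Proof. exact: h0. Qed.
Lemma Od0 : Od 0 = y. Proof. exact: h1. Qed.

Lemma E1 : E 1 = a.
Proof.
have h : E 1 * x = 1 + y.
  rewrite -Od0 -hevN E0 /Cc /commC !mulrA. do 6 cxy. by [].
by rewrite /a -h (mulrK ux).
Qed.

Definition St m := [/\ Q * Od m = E m.+1 * E m.+1 + Cc * E m * Cc * E m,
  Cc * E m * Q - Q * E m = Cc * E m.+1 * Cc - E m.+1,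
  E m.+1 * Q - Q * E m.+1 * Cc = E m - Cc * E m * Cc,
  Od m * E m.+1 = E m.+1 * Cc * Od m & E m * E m.+1 = Ci + Od m].

Lemma St0 : St 0.
Proof.
rewrite /St E0 E1 Od0 /Q /u /w /a /Cc /commC /Ci.
split; nc; do 8 cxy; zmod.
Qed.

Lemma stepall {m : nat} : St m -> Od m \is a GRing.unit -> E m.+1 \is a GRing.unit ->
  St m.+1 /\ E m.+2 = Q * E m.+1 - Cc * E m.
Proof.
case=> J K1 K2 QC Dd uO uB.
have [hB2 J2 K1n K2n [QC2 D2]] :=
  @alg_step _ _ _ _ _ _ _ _ _ CCi CiC J K1 K2 QC Dd uO uB (hoddN m) (hevN m.+1).
by split; [split|].
Qed.

Lemma pnz z : pos z -> 1 + z != 0.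
Proof. exact: (@pos_nz _ x y hdiv hfree). Qed.

Lemma uOd {m : nat} : pos (E m) -> Od m \is a GRing.unit.
Proof.
case: m => [_|k hp]; first by rewrite Od0 uy.
apply: hdiv; apply/negP => /eqP hz.
have := hoddN k; rewrite hz !mul0r => /esym/eqP.
by apply/negP; apply: pnz; apply: posX.
Qed.

Lemma uE {m : nat} : pos (Od m) -> E m.+1 \is a GRing.unit.
Proof.
move=> hp; apply: hdiv; apply/negP => /eqP hz.
have := hevN m; rewrite hz !mul0r => /esym/eqP.
by apply/negP; apply: pnz.
Qed.

Definition Ps m := [/\ pos (E m.+1 - al m), pos (E m.+2 - u * E m.+1 - be m.+1)
  & pos (Od m.+1)].

Lemma posO B B2 O2 k : pos (B - al k) -> pos (B2 - u * B - be k.+1) ->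
  B * B2 = Ci + O2 -> pos O2.
Proof.
move=> p1 p2 hD.
have pB : pos B.
  have -> : B = (B - al k) + al k by rewrite subrK.
  by apply: posD => //; apply: posal.
have p3 : pos (B2 - be k.+1).
  have -> : B2 - be k.+1 = u * B + (B2 - u * B - be k.+1) by zmod.
  by apply: posD => //; apply: posM => //; apply: posu.
have pB2 : pos B2.
  have -> : B2 = be k.+1 + (B2 - be k.+1) by zmod.
  by apply: posD => //; apply: posbe.
have -> : O2 = al k * (B2 - be k.+1) + (B - al k) * B2.
  have -> : O2 = B * B2 - Ci by rewrite hD addrC addKr.
  rewrite -(albe k). nc. zmod.
by apply: posD; apply: posM => //; apply: posal.
Qed.

Lemma inv m : [/\ St m, Ps m, pos (E m) & pos (Od m)].
Proof.
have pE0 : pos (E 0) by rewrite E0; posauto.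
have pO0 : pos (Od 0) by rewrite Od0.
elim: m => [|m [Sm [P1 P2 P3] pE pO]].
  have [S1 hE2] := stepall St0 (uOd pE0) (uE pO0).
  split; [exact: St0 | split | exact: pE0 | exact: pO0].
  - rewrite E1 /al expr0 mulr1.
    have -> : a - y * x^-1 = x^-1 by rewrite /a; nc; zmod.
    exact: posxi.
  - have -> : E 2 - u * E 1 - be 1 = 0.
      rewrite hE2 E1 E0 /Q /be expr1 /w /u /a /Cc /commC. nc. do 8 cxy. zmod.
    exact: pos0.
  - case: S1 => _ _ _ _ D1.
    apply: (@posO (E 1) (E 2) _ 0) D1.
      rewrite E1 /al expr0 mulr1.
      have -> : a - y * x^-1 = x^-1 by rewrite /a; nc; zmod.
      exact: posxi.
    have -> : E 2 - u * E 1 - be 1 = 0.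
      rewrite hE2 E1 E0 /Q /be expr1 /w /u /a /Cc /commC. nc. do 8 cxy. zmod.
    exact: pos0.
have [S1 hE2] := stepall Sm (uOd pE) (uE pO).
have pE1 : pos (E m.+1).
  have -> : E m.+1 = (E m.+1 - al m) + al m by rewrite subrK.
  by apply: posD => //; apply: posal.
have [S2 hE3] := stepall S1 (uOd pE1) (uE P3).
have Q1 : pos (E m.+2 - al m.+1).
  have -> : E m.+2 - al m.+1 = (u - g) * E m.+1 + g * (E m.+1 - al m)
      + (E m.+2 - u * E m.+1 - be m.+1) + be m.+1.
    rewrite -(gal m). nc. zmod.
  apply: posD; last exact: posbe.
  apply: posD => //; apply: posD; apply: posM => //; [exact: posug | exact: posg].
have Q2 : pos (E m.+3 - u * E m.+2 - be m.+2).
  have -> : E m.+3 - u * E m.+2 - be m.+2 = (w * u - Cc) * E m.+1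
      + w * (E m.+2 - u * E m.+1 - be m.+1).
    rewrite hE3 hE2 /Q -(wbe m.+1). nc. zmod.
  by apply: posD; apply: posM => //; [exact: poswuC | exact: posw].
split=> //; split=> //.
case: S2 => _ _ _ _ D2.
exact: (@posO (E m.+2) (E m.+3) _ m.+1 Q1 Q2 D2).
Qed.

Lemma main_pos (n : nat) : nonneg_laurent x y (R (Posz n)).
Proof.
have [m hm] : exists m, n = (2 * m)%N \/ n = (2 * m + 1)%N.
  exists n./2; set k := n./2; move: (odd_double_half n); rewrite -/k -mul2n.
  by case: (odd n) => /= h; [right|left]; lia.
apply: (@pos_nonneg _ x y).
have [_ _ pE pO] := inv m.
by case: hm => ->; [exact: pE | exact: pO].
Qed.
End Main.

Theorem theorem4p8 (D : unitRingType) (x y : D)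
  (hdiv : division_ring D) (hfree : free_group_ring_embeds x y)
  (R : int -> D)
  (hev : forall n : int,
     R (2 * n) * commC x y * R (2 * n - 2) = 1 + R (2 * n - 1))
  (hodd : forall n : int,
     R (2 * n + 1) * commC x y * R (2 * n - 1) = 1 + R (2 * n) ^+ 4)
  (h0 : R 0 = y * x * y^-1) (h1 : R 1 = y) :
  forall n : nat, nonneg_laurent x y (R (Posz n)).
Proof. exact: (@main_pos D x y hdiv hfree R hev hodd h0 h1). Qed.
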